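(* Let $\Gamma$ be a labeled oriented tree of Coxeter type with vertex set $\mathbf{x}$, and let $e=(x\xrightarrow{w}y)$ be an edge of $\Gamma$, with relator $r_e=xw(wy)^{-1}$. Then, in the group $\langle \mathbf{x}\mid x^2,\ x\in\mathbf{x}\rangle$, the relator $r_e$ reduces, up to cyclic permutation, to $\bar r_e=(yx)^{m_e}$ for some odd integer $m_e\ge 1$.
   Context: A labeled oriented tree (LOT) $\Gamma$ is a finite tree with vertex set $\mathbf{x}$ whose edges are oriented and each edge is labeled by a (possibly empty) word $w$ in the letters $\mathbf{x}^{\pm1}$; $e=(x\xrightarrow{w}y)$ denotes the edge from $x$ to $y$ labeled $w$. Its presentation is $P(\Gamma)=\langle \mathbf{x}\mid r_e,\ e \text{ an edge}\rangle$ with $r_e=xw(wy)^{-1}$. $\Gamma$ is of Coxeter type if for every edge $e=(x\xrightarrow{w}y)$, every letter $z\neq x,y$ occurs in $w$ only with even (positive or negative) exponent, i.e. only in syllables $z^p$ with $p$ even. *)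

(* Defs.v *)
From mathcomp Require Import all_boot all_order all_algebra.
Set Implicit Arguments. Unset Strict Implicit. Unset Printing Implicit Defensive.
Import GRing.Theory Num.Theory.

Section LOT.
Variable V : finType.

(* A word in the letters V^{+-1}: a letter together with its sign
   (true = exponent +1, false = exponent -1). *)
Definition word := seq (V * bool).

Definition winv (w : word) : word := rev (map (fun p => (p.1, ~~ p.2)) w).

Definition edge := (V * V * word)%type.
Definition esrc (e : edge) : V := e.1.1.
Definition etgt (e : edge) : V := e.1.2.
Definition elab (e : edge) : word := e.2.

Definition relator (e : edge) : word :=
  [:: (esrc e, true)] ++ elab e ++ winv (elab e ++ [:: (etgt e, true)]).

Definition adj (E : seq edge) : rel V :=
  fun u v => has (fun e => ((esrc e == u) && (etgt e == v))
                        || ((esrc e == v) && (etgt e == u))) E.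

Definition is_tree (E : seq edge) : Prop :=
  0 < #|V| /\ size E = #|V| - 1 /\ (forall u v, connect (adj E) u v).

(* Syllable decomposition of a word: maximal blocks z^{e1} ... z^{ek} of a
   single letter z, recorded as (z, e1 + ... + ek). *)
Fixpoint syllables (w : word) : seq (V * int) :=
  match w with
  | [::] => [::]
  | (a, s) :: w' =>
      let sg : int := if s then 1%R else (-1)%R in
      match syllables w' with
      | (b, p) :: t => if a == b then (b, (sg + p)%R) :: t
                       else (a, sg) :: (b, p) :: t
      | [::] => [:: (a, sg)]
      end
  end.

Definition coxeter_type (E : seq edge) : Prop :=
  forall e, e \in E -> forall z (p : int), (z, p) \in syllables (elab e) ->
    z != esrc e -> z != etgt e -> (2 %| p)%Z.

(* Normal form in the group < V | x^2, x in V > (free product of copies of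
   Z/2): x^{-1} = x, so signs are forgotten; then adjacent equal letters are
   cancelled.  The result is the unique word with no two adjacent equal
   letters representing the same group element. *)
Definition cox_cancel (a : V) (s : seq V) : seq V :=
  match s with
  | b :: s' => if a == b then s' else a :: s
  | [::] => [:: a]
  end.
Definition cox_reduce (w : word) : seq V := foldr cox_cancel [::] (map fst w).

End LOT.

(* Main.v *)
Require Import Defs.
From mathcomp Require Import all_boot all_order all_algebra.
From mathcomp Require Import zify.

Module Helpers.
Set Implicit Arguments. Unset Strict Implicit. Unset Printing Implicit Defensive.
Import GRing.Theory.


Section W.
Variable V : finType.
Implicit Types (u s t : seq V) (a b : V).

Fixpoint redp s := match s with a :: ((b :: _) as t) => (a != b) && redp t | _ => true end.

Lemma redp_cancel a u : redp u -> redp (cox_cancel a u).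
Proof.
case: u => [|b u] //=; case: eqP => [eab|ne].
  by case: u => [|c u] //= /andP[].
by move=> h; apply/andP; split => //; apply/eqP.
Qed.

Lemma cancelK a u : redp u -> cox_cancel a (cox_cancel a u) = u.
Proof.
case: u => [|b u] /=; first by rewrite eqxx.
case: eqP => [eab|ne].
  by subst; case: u => [|c u] //= /andP[/negbTE ->].
by move=> _ /=; rewrite eqxx; case: (a =P b).
Qed.

Definition F s u := foldr (@cox_cancel V) u s.

Lemma redpF s u : redp u -> redp (F s u).
Proof. by elim: s => //= a s IH /IH; apply: redp_cancel. Qed.

Lemma F_cat s t u : F (s ++ t) u = F s (F t u).
Proof. exact: foldr_cat. Qed.

Definition eqv s t := forall u, redp u -> F s u = F t u.

Lemma eqv_refl s : eqv s s. Proof. by []. Qed.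
Lemma eqv_sym s t : eqv s t -> eqv t s. Proof. by move=> h u /h. Qed.
Lemma eqv_trans s t r : eqv s t -> eqv t r -> eqv s r.
Proof. by move=> h1 h2 u hu; rewrite h1 // h2. Qed.

Lemma eqv_cat s1 s2 t1 t2 : eqv s1 t1 -> eqv s2 t2 -> eqv (s1 ++ s2) (t1 ++ t2).
Proof.
move=> h1 h2 u hu; rewrite !F_cat h2 // h1 //; exact: redpF.
Qed.

Lemma eqv_cons a s t : eqv s t -> eqv (a :: s) (a :: t).
Proof. by move=> h; apply: (@eqv_cat [:: a] s [:: a] t). Qed.

Lemma eqv_aa a : eqv [:: a; a] [::].
Proof. by move=> u hu /=; rewrite cancelK. Qed.

Lemma F_revK s u : redp u -> F (rev s) (F s u) = u.
Proof.
elim: s u => //= a s IH u hu.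
rewrite rev_cons -cats1 F_cat /= cancelK ?IH //; exact: redpF.
Qed.

Lemma F_Krev s u : redp u -> F s (F (rev s) u) = u.
Proof. by move=> hu; have := F_revK (rev s) hu; rewrite revK. Qed.

Lemma eqv_rev s t : eqv s t -> eqv (rev s) (rev t).
Proof.
move=> h u hu.
have hr : redp (F (rev t) u) by exact: redpF.
by rewrite -{1}(F_Krev t hu) -h // F_revK.
Qed.

Lemma size_cancel a u : odd (size (cox_cancel a u)) = ~~ odd (size u).
Proof. by case: u => [|b u] //=; case: eqP => //= _; rewrite negbK. Qed.

Lemma sizeF s u : odd (size (F s u)) = odd (size s) (+) odd (size u).
Proof. elim: s => //= a s IH; rewrite size_cancel IH; by case: (odd (size s)); case: (odd (size u)). Qed.

Lemma count_cancel x a u : odd (count_mem x (cox_cancel a u)) = (a == x) (+) odd (count_mem x u).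
Proof.
case: u => [|b u] /=; first by case: (a == x).
case: (a =P b) => [<-|_] /=; rewrite ?oddD.
all: by case: (a == x); case: (b == x); case: (odd (count_mem x u)).
Qed.

Lemma countF x s u : odd (count_mem x (F s u)) = odd (count_mem x s) (+) odd (count_mem x u).
Proof.
elim: s => //= a s IH; rewrite count_cancel IH oddD.
by case: (a == x) => /=; case: (odd (count_mem x s)); case: (odd (count_mem x u)).
Qed.

Lemma allF (P : pred V) s u : all P s -> all P u -> all P (F s u).
Proof.
elim: s => //= a s IH /andP[pa ps] pu; have := IH ps pu.
by case: (F s u) => [|b r] /=; rewrite ?pa //; case: eqP => _ /=; [case/andP| rewrite pa => ->].
Qed.

End W.


Section S.
Variable V : finType.
Definition cw (S : seq (V * int)) : seq V :=
  flatten (map (fun zp => nseq (~~ (2 %| zp.2)%Z) zp.1) S).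

Lemma dvd2_1 (p : int) : (2 %| (1 + p)%R)%Z = ~~ (2 %| p)%Z.
Proof.
apply/idP/idP; [move/dvdzP=>[q hq]; apply/negP=>/dvdzP[r hr]|move=>h]; try lia.
Qed.

Lemma dvd2_m1 (p : int) : (2 %| (-1 + p)%R)%Z = ~~ (2 %| p)%Z.
Proof.
apply/idP/idP; [move/dvdzP=>[q hq]; apply/negP=>/dvdzP[r hr]|move=>h]; try lia.
Qed.

Lemma syl_eqv (w : word V) : eqv (map fst w) (cw (syllables w)).
Proof.
elim: w => [|[a s] w IH] /=; first by [].
case E: (syllables w) IH => [|[b p] t] IH.
  have -> : cw [:: (a, if s then 1%R else (-1)%R)] = [:: a] by case: s.
  exact: eqv_cons.
case: (a =P b) => [eab|ne]; first subst b.
  rewrite /cw /= -/(cw t).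
  have -> : (~~ (2 %| ((if s then 1 else -1) + p)%R)%Z) = (2 %| p)%Z.
    by case: s; rewrite ?dvd2_1 ?dvd2_m1 negbK.
  move: IH; rewrite /cw /= -/(cw t).
  case: (2 %| p)%Z => /= IH.
    exact: eqv_cons.
  apply: eqv_trans (eqv_cons a IH) _.
  exact: (@eqv_cat _ [:: a; a] (cw t) [::] (cw t) (eqv_aa a) (@eqv_refl _ _)).
have -> : cw [:: (a, if s then 1%R else (-1)%R), (b, p) & t] = a :: cw ((b, p) :: t) by case: s.
exact: eqv_cons.
Qed.
End S.


Section T.
Variable V : finType.

Lemma conn_closed (r : rel V) (P : pred V) x y :
  (forall u v, P u -> r u v -> P v) -> P x -> connect r x y -> P y.
Proof.
move=> cl px /connectP[p pth ->]; elim: p x px pth => //= z p IH x px /andP[rxz pth].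
exact: IH (cl _ _ px rxz) pth.
Qed.

Definition reach (E : seq (edge V)) (S : {set V}) : {set V} :=
  [set y | [exists s in S, connect (adj E) s y]].

Definition nonloop (e : edge V) := esrc e != etgt e.

Lemma reach_sub E e (S T : {set V}) :
  (forall u v, u \in reach E T ->
     ((esrc e == u) && (etgt e == v)) || ((esrc e == v) && (etgt e == u)) ->
     v \in reach E T) ->
  S \subset T -> reach (e :: E) S \subset reach E T.
Proof.
move=> hyp /subsetP sST; apply/subsetP => y; rewrite inE => /existsP[s /andP[sS cs]].
apply: (conn_closed (P := mem (reach E T))) cs.
  move=> u v uR; rewrite /adj /= => /orP[/(hyp _ _ uR) //|ad].
  move: uR; rewrite !inE => /existsP[s' /andP[s'T cs']].
  apply/existsP; exists s'; rewrite s'T /=.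
  by apply: connect_trans cs' (connect1 _).
by rewrite /= inE; apply/existsP; exists s; rewrite sST //= connect0.
Qed.

Lemma reach_bound E S : #|reach E S| <= count nonloop E + #|S|.
Proof.
elim: E S => [|e E IH] S /=.
  apply: subset_leq_card; apply/subsetP => y; rewrite inE => /existsP[s /andP[sS cs]].
  by apply: (conn_closed (P := mem S)) cs.
set a := esrc e; set b := etgt e.
case: (boolP (nonloop e)) => nl.
  case: (boolP (a \in reach E S)) => ha.
    have sub : reach (e :: E) S \subset reach E (b |: S).
      apply: reach_sub; last by apply/subsetP => z zS; rewrite inE zS orbT.
      move=> u v _ /orP[/andP[_ /eqP <-]|/andP[/eqP <- _]].
        by rewrite inE; apply/existsP; exists b; rewrite !inE eqxx connect0.
      move: ha; rewrite !inE => /existsP[s /andP[sS cs]].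
      by apply/existsP; exists s; rewrite inE sS orbT.
    apply: leq_trans (subset_leq_card sub) _.
    apply: leq_trans (IH _) _; rewrite cardsU1; lia.
  case: (boolP (b \in reach E S)) => hb.
    have sub : reach (e :: E) S \subset reach E (a |: S).
      apply: reach_sub; last by apply/subsetP => z zS; rewrite inE zS orbT.
      move=> u v _ /orP[/andP[_ /eqP <-]|/andP[/eqP <- _]].
        move: hb; rewrite !inE => /existsP[s /andP[sS cs]].
        by apply/existsP; exists s; rewrite inE sS orbT.
      by rewrite inE; apply/existsP; exists a; rewrite !inE eqxx connect0.
    apply: leq_trans (subset_leq_card sub) _.
    apply: leq_trans (IH _) _; rewrite cardsU1; lia.
  have sub : reach (e :: E) S \subset reach E S.
    apply: reach_sub => //.
    move=> u v uR /orP[/andP[/eqP au _]|/andP[_ /eqP bu]].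
      by move: ha; rewrite /a au uR.
    by move: hb; rewrite /b bu uR.
  apply: leq_trans (subset_leq_card sub) _; apply: leq_trans (IH _) _; lia.
have sub : reach (e :: E) S \subset reach E S.
  apply: reach_sub => //.
  move: nl; rewrite /nonloop negbK => /eqP ab.
  move=> u v uR /orP[/andP[/eqP au /eqP bv]|/andP[/eqP av /eqP bu]].
    by rewrite -bv -ab au.
  by rewrite -av ab bu.
apply: leq_trans (subset_leq_card sub) _; apply: leq_trans (IH _) _; lia.
Qed.

Lemma tree_nonloop (E : seq (edge V)) (e : edge V) : is_tree E -> e \in E -> esrc e != etgt e.
Proof.
move=> [n0 [sz conn]] eE.
have full : reach E [set esrc e] = setT.
  apply/setP => y; rewrite !inE; apply/existsP; exists (esrc e); by rewrite inE eqxx conn.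
have := reach_bound E [set esrc e]; rewrite full cardsT cards1.
have := count_size nonloop E.
move=> h1 h2.
have : count nonloop E = size E by lia.
move/eqP; rewrite -all_count => /allP; exact.
Qed.
End T.


Section A.
Variable V : finType.

Lemma alt_flat (c d : V) m r : c != d -> redp r -> all (fun z => (z == c) || (z == d)) r ->
  size r = m.*2 -> head c r = c -> r = flatten (nseq m [:: c; d]).
Proof.
move=> cd; elim: m r => [|m IH] [|a [|b r]] //=; rewrite ?doubleS //=.
move=> /andP[ab rr] /and3P[ha hb hr] [sz] ac; subst a.
have bd : b = d.
  by move: hb ab; case: (b =P c) => [->|_]; [rewrite eqxx|move=> /= /eqP].
subst b; congr (_ :: _ :: _); apply: IH => //.
  by case: r rr {sz hr} => // ? ? /andP[].
case: r rr hr {sz} => [|b r] //= /andP[db _] /andP[hb2 _].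
by move: hb2 db; case: (b =P c) => //= _ /eqP ->; rewrite eqxx.
Qed.

Lemma count_flat (x : V) m s : count_mem x (flatten (nseq m s)) = m * count_mem x s.
Proof. by elim: m => //= m IH; rewrite count_cat IH mulSn. Qed.

Lemma flat_shift (x y : V) m :
  flatten (nseq m.+1 [:: x; y]) = x :: rcons (flatten (nseq m [:: y; x])) y.
Proof. by elim: m => //= m IH; rewrite IH. Qed.

Lemma alt_form (x y : V) r : x != y -> redp r -> all (fun c => (c == x) || (c == y)) r ->
  ~~ odd (size r) -> odd (count_mem x r) ->
  exists m, [/\ odd m, 0 < m & exists k, r = rot k (flatten (nseq m [:: y; x]))].
Proof.
move=> xy rr ar ev od.
have [m hm] : exists m, size r = m.*2.
  by exists (size r)./2; rewrite -[LHS](odd_double_half (size r)) (negbTE ev).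
case: r rr ar ev od hm => [|a r0] // rr ar ev od hm.
have /andP[ha _] := ar.
have yx : y != x by rewrite eq_sym.
case/orP: ha => /eqP ea; subst a.
  have E : x :: r0 = flatten (nseq m [:: x; y]) by apply: alt_flat => //=; rewrite eqxx.
  have cnt : count_mem x (x :: r0) = m by rewrite E count_flat /= eqxx (negbTE yx) muln1.
  rewrite cnt in od.
  case: m hm E cnt od => [|m] // hm E cnt od.
  exists m.+1; split => //; exists 1; rewrite E flat_shift /=.
  by rewrite rot1_cons.
have ar' : all (fun z => (z == y) || (z == x)) (y :: r0).
  by apply: sub_all ar => z; rewrite orbC.
have E : y :: r0 = flatten (nseq m [:: y; x]) by apply: alt_flat => //=; rewrite eqxx.
have cnt : count_mem x (y :: r0) = m by rewrite E count_flat /= eqxx (negbTE yx) muln1.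
rewrite cnt in od.
case: m hm E cnt od => [|m] // hm E cnt od.
by exists m.+1; split => //; exists 0; rewrite rot0 E.
Qed.
End A.


Lemma all_cw (V : finType) (P : pred V) (Sy : seq (V * int)) :
  (forall zp, zp \in Sy -> ~~ (2 %| zp.2)%Z -> P zp.1) -> all P (cw Sy).
Proof.
elim: Sy => [|[z p] Sy IH] //= h; rewrite /cw /= all_cat; apply/andP; split.
  case hp: (2 %| p)%Z => //=; rewrite andbT; apply: (h (z, p)); rewrite ?inE ?eqxx ?hp //.
by apply: IH => zp zi; apply: h; rewrite inE zi orbT.
Qed.


End Helpers.
Import Helpers.

Theorem lemma2p3 (V : finType) (E : seq (edge V)) (e : edge V) :
  is_tree E -> coxeter_type E -> e \in E ->
  exists m : nat, [/\ odd m, 0 < m &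
    exists k : nat,
      cox_reduce (relator e) = rot k (flatten (nseq m [:: etgt e; esrc e]))].
Proof.
move=> tr cox eE.
have xy := tree_nonloop tr eE.
set x := esrc e in xy *; set y := etgt e in xy *.
set w := elab e.
set v := cw (syllables w).
have av : all (fun c => (c == x) || (c == y)) v.
  apply: all_cw => -[z p] zi /= nd.
  case: (z =P x) => //= /eqP zx; case: (z =P y) => //= /eqP zy.
  by move: nd; rewrite (cox e eE z p zi zx zy).
have hrel : map fst (relator e) = x :: map fst w ++ y :: rev (map fst w).
  rewrite /relator /winv /= map_cat map_cat /= cats1 rev_rcons /= map_rev -map_comp.
  by congr (_ :: _ ++ _ :: rev _); apply: eq_map.
have eq1 : eqv (map fst (relator e)) (x :: v ++ y :: rev v).
  rewrite hrel; apply: eqv_cons; apply: eqv_cat; first exact: syl_eqv.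
  by apply: eqv_cons; apply: eqv_rev; exact: syl_eqv.
have -> : cox_reduce (relator e) = F (x :: v ++ y :: rev v) [::].
  by rewrite -eq1.
apply: alt_form => //.
- exact: redpF.
- by apply: allF => //=; rewrite eqxx /= all_cat av /= eqxx orbT all_rev.
- by rewrite sizeF /= size_cat /= size_rev addnS addnn /= odd_double.
- rewrite countF /= count_cat /= count_rev eqxx (negbTE (_ : y != x)) ?(eq_sym y) //.
  by rewrite add0n addnn /= odd_double.
Qed.
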